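(* Let $H$ be the Hilbert transform on $\mathbb{R}$ and $b(x)=\log|x|$. There exist constants $c_5,c_6>0$ such that for all $1<p<\infty$, \[ \|H\|_{L^p(\mathbb{R})\to L^{p,\infty}(\mathbb{R})}\ge c_5\,p,\qquad \|[b,H]\|_{L^p(\mathbb{R})\to L^{p,\infty}(\mathbb{R})}\ge c_6\max\{p',p^2\}. \]
   Context: $Hf(x)=\mathrm{p.v.}\int_{\mathbb{R}}\frac{f(y)}{x-y}\,dy$; $[b,H]f=bHf-H(bf)$; $p'=p/(p-1)$; $L^{p,\infty}$ has quasi-norm $\sup_{\lambda>0}\lambda|\{|g|>\lambda\}|^{1/p}$. *)

(* Defs.v *)
From HB Require Import structures.
From mathcomp Require Import all_boot all_order all_algebra.
From mathcomp Require Import all_classical all_reals all_analysis.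
Set Implicit Arguments. Unset Strict Implicit. Unset Printing Implicit Defensive.
Import Order.TTheory GRing.Theory Num.Theory.
Import numFieldNormedType.Exports.
Local Open Scope classical_set_scope.
Local Open Scope ring_scope.

Section Defs.
Variable R : realType.
Notation mu := (@lebesgue_measure R).

Definition trunc_hilbert (f : R -> R) (x eps : R) : R :=
  Rintegral mu [set y | eps < `|x - y|] (fun y => f y / (x - y)).

Definition hilbert (f : R -> R) (x : R) : R :=
  lim ((trunc_hilbert f x) @ 0^'+).

Definition logabs (x : R) : R := ln `|x|.

Definition commutator (b : R -> R) (T : (R -> R) -> R -> R) (f : R -> R) : R -> R :=
  fun x => b x * T f x - T (fun y => b y * f y) x.

Definition Lpnorm (p : R) (f : R -> R) : \bar R :=
  Lnorm mu p%:E (fun x => (f x)%:E).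

Definition superlevel (g : R -> R) (lam : R) : set R := [set x | lam < `|g x|].

Definition weakLpnorm (p : R) (g : R -> R) : \bar R :=
  ereal_sup [set (lam%:E * poweR (mu (superlevel g lam)) p^-1)%E
            | lam in [set lam : R | 0 < lam]].

Definition opnorm_Lp_weakLp (p : R) (T : (R -> R) -> R -> R) : \bar R :=
  ereal_sup [set weakLpnorm p (T f)
            | f in [set f : R -> R | measurable_fun setT f /\ (Lpnorm p f <= 1)%E]].

End Defs.

(* Main.v *)
Require Import Defs.
From HB Require Import structures.
From mathcomp Require Import all_boot all_order all_algebra.
From mathcomp Require Import all_classical all_reals all_analysis.
From mathcomp Require Import ring lra.
Import Order.TTheory GRing.Theory Num.Theory.
Import numFieldNormedType.Exports.
Local Open Scope ring_scope.
Local Open Scope classical_set_scope.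

Set Implicit Arguments.
Section S.
Variable R : realType.
Notation mu := (@lebesgue_measure R).

Lemma mu_mono (A B : set R) : A `<=` B -> (mu A <= mu B)%E.
Proof.
move=> AB. rewrite /lebesgue_measure /lebesgue_stieltjes_measure /measure_extension.
exact: le_outer_measure.
Qed.

Lemma weak_lb (p lam a b : R) (g : R -> R) : 0 < lam -> a <= b -> 0 < p ->
  (forall x, a <= x <= b -> lam < `|g x|) ->
  ((lam * (b - a) `^ p^-1)%:E <= weakLpnorm p g)%E.
Proof.
move=> lam0 ab p0 H.
apply: (@le_trans _ _ (lam%:E * poweR (mu (superlevel g lam)) p^-1)%E); last first.
  by apply: ereal_sup_ubound; exists lam.
rewrite EFinM lee_pmul2l ?lte_fin //.
have -> : ((b - a) `^ p^-1)%:E = poweR ((b - a)%:E) p^-1 by [].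
apply: gt0_ler_poweR.
- by rewrite invr_ge0 ltW.
- by rewrite in_itv /= lee_fin subr_ge0 ab leey.
- by rewrite in_itv /= measure_ge0 leey.
have -> : (b - a)%:E = mu `[a, b].
  rewrite lebesgue_measure_itv /= lte_fin.
  case: ltgtP ab => //=.
  by move=> ->; rewrite subrr.
apply: mu_mono => x /=; rewrite in_itv /= => /H; rewrite /superlevel /=.
by [].
Qed.

Lemma opnorm_lb (p : R) (T : (R -> R) -> R -> R) (f : R -> R) :
  measurable_fun setT f -> (Lpnorm p f <= 1)%E ->
  (weakLpnorm p (T f) <= opnorm_Lp_weakLp p T)%E.
Proof.
move=> mf nf. by apply: ereal_sup_ubound; exists f.
Qed.


Lemma hilbert_off (f : R -> R) (a c x : R) :
  (forall y, ~ (a <= y <= c) -> f y = 0) -> (x < a \/ c < x) ->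
  hilbert f x = \int[mu]_(y in `[a, c]) (f y / (x - y)).
Proof.
move=> f0 xac.
pose d := if x < a then a - x else x - c.
have d0 : 0 < d.
  rewrite /d; case: ifPn => xa; first by rewrite subr_gt0.
  by case: xac => h; [rewrite h in xa | rewrite subr_gt0].
rewrite /hilbert; apply: norm_lim_near_cst.
near=> eps.
rewrite /trunc_hilbert Rintegral_mkcond [RHS]Rintegral_mkcond.
apply: eq_Rintegral => y _; rewrite !patchE.
case: (boolP (y \in `[a, c])) => yac.
  have -> : y \in [set y | eps < `|x - y|].
    rewrite inE /=.
    have epsd : eps < d by near: eps; apply: nbhs_right_lt.
    apply: (lt_le_trans epsd).
    move: yac; rewrite inE /= in_itv /= => /andP[ay yc].
    rewrite /d; case: ifPn => xa.
      rewrite ltr0_norm ?subr_lt0 ?(lt_le_trans xa) // opprB.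
      by rewrite lerD2r.
    case: xac => [h|cx]; first by rewrite h in xa.
    rewrite gtr0_norm ?subr_gt0 ?(le_lt_trans yc) //.
    by rewrite lerD2l lerN2.
  by [].
have -> : f y = 0.
  apply: f0 => h; move/negP: yac; apply; by rewrite inE /= in_itv /= h.
by rewrite mul0r; case: ifP.
Unshelve. all: by end_near.
Qed.

Lemma int_cont (a b : R) (g : R -> R) :
  (forall y : R, a <= y <= b -> continuous_at y g) ->
  mu.-integrable `[a, b] (EFin \o g).
Proof.
move=> H; apply: continuous_compact_integrable; first exact: segment_compact.
by apply: continuous_in_subspaceT => y; rewrite inE /= in_itv /= => /H.
Qed.

Lemma cont_invlin (x y : R) : y != x -> continuous_at y (fun y : R => (x - y)^-1).
Proof.
move=> yx; apply: (@continuousV _ _ (fun y => x - y)); first by rewrite subr_eq0 eq_sym.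
by apply: cvgB; [exact: cvg_cst | exact: cvg_id].
Qed.

Lemma cont_ln (y : R) : 0 < y -> continuous_at y (@ln R).
Proof. exact: continuous_ln. Qed.

Lemma int_inv (m : R) : 0 < m < 1 ->
  \int[mu]_(y in `[m, 1]) y^-1 = - ln m.
Proof.
move=> /andP[m0 m1].
rewrite /Rintegral (@continuous_FTC2 _ _ (@ln R)) //=.
- by rewrite ln1 sub0r.
- apply: continuous_in_subspaceT => y; rewrite inE /= in_itv /= => /andP[my _].
  apply: inv_continuous; rewrite gt_eqF //; exact: lt_le_trans my.
- split.
  + move=> y; rewrite in_itv /= => /andP[my _].
    by have [] := is_derive1_ln (lt_trans m0 my).
  + by apply: cvg_at_right_filter; apply: continuous_ln.
  + by apply: cvg_at_left_filter; apply: continuous_ln.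
- move=> y; rewrite in_itv /= => /andP[my _].
  rewrite derive1E.
  by have [_ ->] := is_derive1_ln (lt_trans m0 my).
Qed.

Definition ind (m : R) : R -> R := \1_(`[m, 1] : set R).

Lemma ind_out (m y : R) : ~ (m <= y <= 1) -> ind m y = 0.
Proof.
move=> h; rewrite /ind indicE.
case: (boolP (y \in _)) => // yin; exfalso; apply: h.
by move: yin; rewrite inE /= in_itv.
Qed.

Lemma ind_in (m y : R) : m <= y <= 1 -> ind m y = 1.
Proof.
move=> h; rewrite /ind indicE.
suff -> : y \in (`[m, 1] : set R) by [].
by rewrite inE /= in_itv.
Qed.

Lemma H_val (m x : R) : (x < m \/ 1 < x) ->
  hilbert (ind m) x = \int[mu]_(y in `[m, 1]) (x - y)^-1.
Proof.
move=> xm; rewrite (@hilbert_off _ m 1) //; last exact: ind_out.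
apply: eq_Rintegral => y; rewrite inE /= in_itv /= => yin.
by rewrite ind_in // mul1r.
Qed.

Lemma bH_val (m x : R) : 0 < m -> (x < m \/ 1 < x) ->
  hilbert (fun y => logabs y * ind m y) x = \int[mu]_(y in `[m, 1]) (ln y * (x - y)^-1).
Proof.
move=> m0 xm; rewrite (@hilbert_off _ m 1) //; last first.
  by move=> y h; rewrite ind_out // mulr0.
apply: eq_Rintegral => y; rewrite inE /= in_itv /= => /[dup] yin /andP[my _].
rewrite ind_in // mulr1 /logabs gtr0_norm //; exact: lt_le_trans my.
Qed.

Lemma C_val (m x : R) : 0 < m -> (x < m \/ 1 < x) ->
  commutator (@logabs R) (@hilbert R) (ind m) x =
  \int[mu]_(y in `[m, 1]) ((logabs x - ln y) * (x - y)^-1).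
Proof.
move=> m0 xm; rewrite /commutator H_val // bH_val //.
have yx : forall y : R, m <= y <= 1 -> y != x.
  move=> y /andP[my y1]; case: xm => h.
    by rewrite gt_eqF // (lt_le_trans h).
  by rewrite lt_eqF // (le_lt_trans y1).
have ypos : forall y : R, m <= y <= 1 -> 0 < y.
  by move=> y /andP[my _]; exact: lt_le_trans my.
have i1 : mu.-integrable `[m, 1] (EFin \o (fun y => (x - y)^-1)).
  by apply: int_cont => y /yx; exact: cont_invlin.
have i2 : mu.-integrable `[m, 1] (EFin \o (fun y => ln y * (x - y)^-1)).
  apply: int_cont => y hy; apply: continuousM.
    exact: cont_ln (ypos _ hy).
  exact: cont_invlin (yx _ hy).
have -> : \int[mu]_(y in `[m, 1]) ((logabs x - ln y) * (x - y)^-1) =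
   \int[mu]_(y in `[m, 1]) (logabs x * (x - y)^-1 - ln y * (x - y)^-1).
  by apply: eq_Rintegral => y _; rewrite mulrBl.
rewrite RintegralB //.
- by rewrite RintegralZl.
- apply: int_cont => y hy; apply: (@continuousM _ _ (fun=> logabs x) (fun y => (x - y)^-1)); [exact: cvg_cst | exact: cont_invlin (yx _ hy)].
Qed.

Lemma inv_ge (a b : R) : 0 < a -> a <= b -> b^-1 <= a^-1.
Proof. move=> a0 ab; rewrite lef_pV2 ?posrE //; exact: lt_le_trans ab. Qed.

Lemma int_inv_scaled (m k : R) : 0 < m < 1 ->
  \int[mu]_(y in `[m, 1]) (k * y^-1) = k * - ln m.
Proof.
move=> /andP[m0 m1]; rewrite RintegralZl //; first by rewrite int_inv ?m0.
apply: int_cont => y /andP[my _]; apply: inv_continuous.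
by rewrite gt_eqF // (lt_le_trans m0).
Qed.

Lemma H_lb (u t : R) : 0 < u -> 0 < t <= expR (- u) ->
  u / 4 <= `| hilbert (ind (expR (- u / 2))) (- t) |.
Proof.
move=> u0 /andP[t0 tu].
set m := expR (- u / 2).
have m0 : 0 < m by rewrite expR_gt0.
have m1 : m < 1 by rewrite expR_lt1; lra.
have tm : t <= m by apply: (le_trans tu); rewrite ler_expR; lra.
have lnm : ln m = - u / 2 by rewrite /m expRK.
rewrite H_val; last by left; lra.
set I := Rintegral _ _ _.
have : I <= \int[mu]_(y in `[m, 1]) ((- 2^-1) * y^-1).
  apply: le_Rintegral => //.
  - apply: int_cont => y /andP[my _]; apply: cont_invlin; rewrite gt_eqF //; lra.
  - have h : mu.-integrable `[m, 1] (EFin \o (fun y : R => (- 2^-1) * y^-1)).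
      apply: int_cont => y /andP[my _].
      apply: (@continuousM _ _ (fun=> - 2^-1) (fun y : R => y^-1)); first exact: cvg_cst.
      by apply: inv_continuous; rewrite gt_eqF // (lt_le_trans m0).
    exact: h.
  - move=> y; rewrite /= in_itv /= => /andP[my _].
    have y0 : 0 < y by exact: lt_le_trans my.
    rewrite -opprD invrN mulNr lerN2 -invfM.
    apply: inv_ge; first lra.
    lra.
rewrite int_inv_scaled ?m0 // lnm => HI.
rewrite ler_normr; apply/orP; right; lra.
Qed.

Lemma C_lb (u t : R) : 0 < u -> 0 < t <= expR (- u) ->
  u * u / 8 <= `| commutator (@logabs R) (@hilbert R) (ind (expR (- u / 2))) (- t) |.
Proof.
move=> u0 /andP[t0 tu].
set m := expR (- u / 2).
have m0 : 0 < m by rewrite expR_gt0.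
have m1 : m < 1 by rewrite expR_lt1; lra.
have tm : t <= m by apply: (le_trans tu); rewrite ler_expR; lra.
have lnm : ln m = - u / 2 by rewrite /m expRK.
have lnt : ln t <= - u.
  by rewrite -(expRK (- u)) ler_ln ?posrE ?expR_gt0.
rewrite C_val //; last by left; lra.
set I := Rintegral _ _ _.
have : \int[mu]_(y in `[m, 1]) ((u / 4) * y^-1) <= I.
  apply: le_Rintegral => //.
  - have h : mu.-integrable `[m, 1] (EFin \o (fun y : R => (u / 4) * y^-1)).
      apply: int_cont => y /andP[my _].
      apply: (@continuousM _ _ (fun=> u / 4) (fun y : R => y^-1)); first exact: cvg_cst.
      by apply: inv_continuous; rewrite gt_eqF // (lt_le_trans m0).
    exact: h.
  - have h : mu.-integrable `[m, 1]
        (EFin \o (fun y : R => (logabs (- t) - ln y) * (- t - y)^-1)).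
      apply: int_cont => y /andP[my _].
      apply: (@continuousM _ _ (fun y : R => logabs (- t) - ln y) (fun y : R => (- t - y)^-1)).
        apply: cvgB; first exact: cvg_cst.
        by apply: continuous_ln; rewrite (lt_le_trans m0).
      by apply: cont_invlin; rewrite gt_eqF //; lra.
    exact: h.
  - move=> y; rewrite /= in_itv /= => /andP[my y1].
    have y0 : 0 < y by exact: lt_le_trans my.
    have lny : - u / 2 <= ln y by rewrite -lnm ler_ln ?posrE.
    rewrite /logabs normrN gtr0_norm // -opprD invrN mulrN -mulNr opprB.
    have -> : u / 4 * y^-1 = (u / 2) * (2 * y)^-1.
      by rewrite invfM; field; rewrite gt_eqF.
    apply: ler_pM; first lra.
    - by rewrite invr_ge0; lra.
    - lra.
    - by apply: inv_ge; lra.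
rewrite int_inv_scaled ?m0 // lnm => HI.
rewrite ler_normr; apply/orP; left; lra.
Qed.

Lemma Cp_lb (q x : R) : 0 < q -> expR q <= x <= 2 * expR q ->
  q / (4 * expR q) <= `| commutator (@logabs R) (@hilbert R) (ind (2^-1)) x |.
Proof.
move=> q0 /andP[Ax xA].
set A := expR q.
have A1 : 1 < A by rewrite /A -expR0 ltr_expR.
move: Ax xA; rewrite -/A => Ax xA.
have x0 : 0 < x by lra.
have lnx : q <= ln x by rewrite -(expRK q) ler_ln ?posrE ?expR_gt0.
rewrite C_val //; last by right; lra.
set I := Rintegral _ _ _.
have : \int[mu]_(y in `[2^-1, 1]) (q / (2 * A)) <= I.
  apply: le_Rintegral => //.
  - have h : mu.-integrable `[2^-1, 1] (EFin \o (fun y : R => q / (2 * A))).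
      by apply: int_cont => y _; exact: cvg_cst.
    exact: h.
  - have h : mu.-integrable `[2^-1, 1]
        (EFin \o (fun y : R => (logabs x - ln y) * (x - y)^-1)).
      apply: int_cont => y /andP[my y1].
      apply: (@continuousM _ _ (fun y : R => logabs x - ln y) (fun y : R => (x - y)^-1)).
        apply: cvgB; first exact: cvg_cst.
        by apply: continuous_ln; lra.
      by apply: cont_invlin; rewrite lt_eqF //; lra.
    exact: h.
  - move=> y; rewrite /= in_itv /= => /andP[my y1].
    have lny : ln y <= 0 by exact: ln_le0.
    rewrite /logabs gtr0_norm //.
    apply: ler_pM.
    + lra.
    + by rewrite invr_ge0; lra.
    + lra.
    + by apply: inv_ge; lra.
rewrite Rintegral_cst //.
have -> : fine (mu `[2^-1, 1]) = 1 - 2^-1.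
  rewrite lebesgue_measure_itv /= lte_fin.
  have -> : (2^-1 < 1 :> R) by lra.
  by [].
move=> HI.
rewrite ler_normr; apply/orP; left.
apply: le_trans HI; rewrite le_eqVlt; apply/orP; left; apply/eqP.
by field; rewrite gt_eqF //; lra.
Qed.

Lemma ind_meas (m : R) : measurable_fun setT (ind m).
Proof. by apply: measurable_realfun.measurable_indic; exact: measurable_itv. Qed.

Lemma ind_norm (p m : R) : 0 < p -> 0 <= m <= 1 -> (Lpnorm p (ind m) <= 1)%E.
Proof.
move=> p0 /andP[m0 m1].
rewrite /Lpnorm unlock /=.
have -> : (\int[mu]_x (`|(ind m x)%:E| `^ p))%E = (\int[mu]_x (\1_(`[m, 1] : set R) x)%:E)%E.
  apply: eq_integral => y _.
  rewrite /ind indicE; case: (y \in _) => /=.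
    by rewrite normr1 powR1.
  by rewrite normr0 powR0 // gt_eqF.
rewrite integral_indic //= setIT lebesgue_measure_itv /= lte_fin.
case: ifP => _.
  rewrite -EFinD /= lee_fin.
  apply: (@le_trans _ _ (1 `^ p^-1)); last by rewrite powR1.
  by apply: ge0_ler_powR; rewrite ?invr_ge0 ?nnegrE //; lra.
rewrite /poweR /= powR0 ?lee_fin //.
by rewrite invr_neq0 // gt_eqF.
Qed.

Lemma pow_lb (p : R) : 1 < p -> expR (- 1 - ln 2) <= (expR (- p) / 2) `^ p^-1.
Proof.
move=> p1.
have a0 : 0 < expR (- p) / 2 by rewrite divr_gt0 ?expR_gt0.
rewrite -[X in _ <= X]lnK; last by rewrite posrE powR_gt0.
rewrite ln_powR ln_div ?posrE ?expR_gt0 // expRK ler_expR.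
have L0 : 0 <= ln (2 : R) by rewrite ln_ge0 //; lra.
have w0 : 0 < p^-1 by rewrite invr_gt0; lra.
have wp : p^-1 * p = 1 by rewrite mulVf // gt_eqF //; lra.
have w1 : p^-1 <= 1 by rewrite invf_le1; lra.
set w := p^-1 in w0 wp w1 *; set L := ln 2 in L0 *.
nra.
Qed.

Lemma window_mem (p x : R) : 1 < p -> - expR (- p) <= x <= - (expR (- p) / 2) ->
  0 < - x <= expR (- p).
Proof.
move=> p1 /andP[h1 h2]; have e0 : 0 < expR (- p) by rewrite expR_gt0.
apply/andP; split; lra.
Qed.
Lemma main_aux :
  exists c5 c6 : R, 0 < c5 /\ 0 < c6 /\
    forall p : R, 1 < p ->
      ((c5 * p)%:E <= opnorm_Lp_weakLp p (@hilbert R))%E /\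
      ((c6 * Num.max (p / (p - 1)) (p ^+ 2))%:E
         <= opnorm_Lp_weakLp p (commutator (@logabs R) (@hilbert R)))%E.
Proof.
set E := expR (- 1 - ln (2 : R)).
have E0 : 0 < E by rewrite expR_gt0.
have E1 : E <= expR (- 1).
  rewrite ler_expR; have : 0 <= ln (2 : R) by rewrite ln_ge0 //; lra.
  lra.
exists (E / 8), (E / 16); split; first lra; split; first lra.
move=> p p1.
have p0 : 0 < p by lra.
set m := expR (- p / 2).
have m01 : 0 <= m <= 1.
  by apply/andP; split; [exact: expR_ge0 | rewrite expR_le1; lra].
have ep0 : 0 < expR (- p) by rewrite expR_gt0.
have win : forall x, - expR (- p) <= x <= - (expR (- p) / 2) ->
    0 < - x <= expR (- p) by move=> x; exact: window_mem.
have blen : - (expR (- p) / 2) - - expR (- p) = expR (- p) / 2 by field.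
have PL := pow_lb _ p1.
have PL0 : 0 <= (expR (- p) / 2) `^ p^-1 by exact: powR_ge0.
have Hb : ((E / 8 * p)%:E <= opnorm_Lp_weakLp p (@hilbert R))%E.
  apply: le_trans (opnorm_lb p (@hilbert R) (ind_meas m) (ind_norm p m p0 m01)).
  apply: le_trans (weak_lb p (p / 8) (- expR (- p)) (- (expR (- p) / 2)) (hilbert (ind m)) _ _ _ _) => //.
  - rewrite lee_fin blen.
    have -> : E / 8 * p = p / 8 * E by field.
    by apply: ler_pM => //; lra.
  - lra.
  - lra.
  - move=> x /win hx; have := H_lb p (- x) p0 hx; rewrite opprK; lra.
have Cb : (((E / 16) * p ^+ 2)%:E <= opnorm_Lp_weakLp p (commutator (@logabs R) (@hilbert R)))%E.
  apply: le_trans (opnorm_lb p (commutator (@logabs R) (@hilbert R)) (ind_meas m) (ind_norm p m p0 m01)).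
  apply: le_trans (weak_lb p (p * p / 16) (- expR (- p)) (- (expR (- p) / 2)) (commutator (@logabs R) (@hilbert R) (ind m)) _ _ _ _) => //.
  - rewrite lee_fin blen.
    have -> : E / 16 * p ^+ 2 = p * p / 16 * E by rewrite expr2; field.
    by apply: ler_pM => //; nra.
  - nra.
  - lra.
  - move=> x /win hx; have := C_lb p (- x) p0 hx; rewrite opprK.
    have : 0 < p * p by nra.
    lra.
set q := p / (p - 1).
have q0 : 0 < q by rewrite /q divr_gt0 //; lra.
set A := expR q.
have A0 : 0 < A by rewrite expR_gt0.
have Cq : ((expR (- 1) / 8 * q)%:E <= opnorm_Lp_weakLp p (commutator (@logabs R) (@hilbert R)))%E.
  have h01 : 0 <= (2^-1 : R) <= 1 by apply/andP; split; lra.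
  apply: le_trans (opnorm_lb p (commutator (@logabs R) (@hilbert R)) (ind_meas 2^-1) (ind_norm p 2^-1 p0 h01)).
  apply: le_trans (weak_lb p (q / (8 * A)) A (2 * A) (commutator (@logabs R) (@hilbert R) (ind 2^-1)) _ _ _ _) => //.
  - rewrite lee_fin.
    have -> : 2 * A - A = A by ring.
    have -> : A `^ p^-1 = expR (q / p).
      rewrite -[LHS]lnK; last by rewrite posrE powR_gt0.
      by rewrite ln_powR /A expRK mulrC.
    have -> : q / (8 * A) * expR (q / p) = q / 8 * expR (q / p - q).
      by rewrite expRD expRN /A; field; rewrite gt_eqF ?expR_gt0.
    have -> : q / p - q = - 1 by rewrite /q; field; apply/andP; split; rewrite gt_eqF //; lra.
    by have -> : expR (-1) / 8 * q = q / 8 * expR (-1) by ring.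
  - by rewrite divr_gt0 //; lra.
  - lra.
  - move=> x hx; have := Cp_lb q x q0 hx.
    have : q / (8 * A) < q / (4 * A).
      by rewrite ltr_pM2l // ltf_pV2 ?posrE; lra.
    lra.
split => //.
rewrite /Num.max /Num.Def.maxr.
case: (ltP (p / (p - 1)) (p ^+ 2)) => h.
- exact: Cb.
- apply: le_trans Cq; rewrite lee_fin -/q.
  apply: ler_pM; lra.
Qed.
End S.
Unset Implicit Arguments.

Theorem lemma1p2 (R : realType) :
  exists c5 c6 : R, 0 < c5 /\ 0 < c6 /\
    forall p : R, 1 < p ->
      ((c5 * p)%:E <= opnorm_Lp_weakLp p (@hilbert R))%E /\
      ((c6 * Num.max (p / (p - 1)) (p ^+ 2))%:E
         <= opnorm_Lp_weakLp p (commutator (@logabs R) (@hilbert R)))%E.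
Proof. exact: main_aux. Qed.
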